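(* For every $Y\in\mathcal A_X$ and every $\mathbf U\in\mathcal E([0,T];\mathcal A_X^{\otimes 2})$, $$\varphi\big(Y\,\delta^X(\mathbf U)^*\big)=(\varphi\times\varphi)\big(\langle D^XY;\mathbf U^*\rangle_{\mathcal H}\big).$$
   Context: NC probability space: a pair $(\mathcal A,\varphi)$ with $\mathcal A$ a unital complex Banach $*$-algebra with $\|XY\|\le\|X\|\|Y\|$, $\|X^*X\|=\|X\|^2$, and $\varphi$ a linear functional with $\varphi(1)=1$, $\varphi(XY)=\varphi(YX)$, $\varphi(X^*X)\ge0$, $\varphi(X^*X)=0\Rightarrow X=0$. For $k\ge2$, $\mathcal A^{\otimes k}$ is the algebraic tensor product with componentwise product $(F_1\otimes\cdots\otimes F_k)\cdot(G_1\otimes\cdots\otimes G_k)=(F_1G_1)\otimes\cdots\otimes(F_kG_k)$, involution $(F_1\otimes\cdots\otimes F_k)^*=F_1^*\otimes\cdots\otimes F_k^*$, and $\varphi^{\times k}(F_1\otimes\cdots\otimes F_k)=\varphi(F_1)\cdots\varphi(F_k)$ (written $\varphi\times\varphi$, $\varphi\times\varphi\times\varphi$), all extended linearly. Also $(F_1\otimes F_2)\sharp G:=F_1GF_2$ and $(\mathrm{Id}\times\varphi\times\mathrm{Id})(F_1\otimes F_2\otimes F_3):=\varphi(F_2)F_1F_3$, extended linearly. A centered semicircular process $\{X_t\}_{t\in[0,T]}$ is a family of self-adjoint elements whose mixed moments satisfy the free Wick formula $\varphi(X_{t_1}\cdots X_{t_r})=\sum_{\pi\in NC_2(r)}\prod_{\{p,q\}\in\pi}\varphi(X_{t_p}X_{t_q})$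 for even $r$ ($NC_2(r)$ = non-crossing pairings of $\{1,\dots,r\}$) and vanishing odd moments. Fix $T>0$ and a centered semicircular process $\{X_t\}_{t\in[0,T]}$ in $(\mathcal A,\varphi)$; $\mathcal A_X$ is the unital subalgebra generated by $\{X_t\}$. $\mathcal E([0,T];\mathbb R)$ is the space of step functions $h=\sum_i\alpha_i\mathbf 1_{[a_i,b_i)}$ ($\alpha_i\in\mathbb R$, $0\le a_i<b_i\le T$), and $X(h):=\sum_i\alpha_i(X_{b_i}-X_{a_i})$. $\mathcal H$ is the completion of $\mathcal E([0,T];\mathbb R)$ for the inner product determined by $\langle\mathbf 1_{[0,s]},\mathbf 1_{[0,t]}\rangle_{\mathcal H}=\varphi(X_sX_t)$. For an algebra $E$, $\mathcal E([0,T];E)$ is the set of finite sums $t\mapsto\sum_i x_ih_i(t)$ with $x_i\in E$, $h_i\in\mathcal E([0,T];\mathbb R)$. Pairings: $\langle xh,k\rangle_{\mathcal H}=\langle h,xk\rangle_{\mathcal H}:=x\langle h,k\rangle_{\mathcal H}$ and $\langle xh;yk\rangle_{\mathcal H}:=(x\cdot y)\langle h,k\rangle_{\mathcal H}$, extended bilinearly; for $\mathbf U=\sum_ix_ih_i$, $\mathbf U^*:=\sum_ix_i^*h_i$. The derivative $D^X:\mathcal A_X\to\mathcal E([0,T];\mathcal A_X^{\otimes2})$ is the linear map with $D^X1=0$ and $D^X\big(X(h_1)\cdots X(h_m)\big)=\sum_{i=1}^m\big[(X(h_1)\cdots X(h_{i-1}))\otimes(X(h_{i+1})\cdots X(h_m))\big]h_i$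 (empty products $=1$). For $F_1,F_2\in\mathcal A_X$, $D^X_1(F_1\otimes F_2):=D^XF_1\otimes F_2$, $D^X_2(F_1\otimes F_2):=F_1\otimes D^XF_2$ (in $\mathcal E([0,T];\mathcal A_X^{\otimes3})$), extended linearly, and $D^X:=D^X_1+D^X_2$ on $\mathcal A_X^{\otimes2}$. The divergence is defined for $\mathbf F\in\mathcal A_X^{\otimes2}$, $h\in\mathcal E([0,T];\mathbb R)$ by $\delta^X(\mathbf Fh):=\mathbf F\sharp X(h)-(\mathrm{Id}\times\varphi\times\mathrm{Id})\big(\langle D^X\mathbf F,h\rangle_{\mathcal H}\big)$ and extended linearly to $\mathcal E([0,T];\mathcal A_X^{\otimes2})$. *)

(* Defs.v *)
From Stdlib Require Import Reals List Arith.
Import ListNotations.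
Open Scope R_scope.

Record C : Type := mkC { Re : R; Im : R }.
Definition C0 : C := mkC 0 0.
Definition C1 : C := mkC 1 0.
Definition RtoC (r : R) : C := mkC r 0.
Definition Cadd (z w : C) : C := mkC (Re z + Re w) (Im z + Im w).
Definition Copp (z : C) : C := mkC (- Re z) (- Im z).
Definition Csub (z w : C) : C := Cadd z (Copp w).
Definition Cmul (z w : C) : C :=
  mkC (Re z * Re w - Im z * Im w) (Re z * Im w + Im z * Re w).
Definition Cconj (z : C) : C := mkC (Re z) (- Im z).
Definition Cmod (z : C) : R := sqrt (Re z ^ 2 + Im z ^ 2).
Definition Csum (l : list C) : C := fold_right Cadd C0 l.
Definition Cprod (l : list C) : C := fold_right Cmul C1 l.

Record NCProbSpace : Type := {
  carrier :> Type;
  zero : carrier;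
  one : carrier;
  add : carrier -> carrier -> carrier;
  opp : carrier -> carrier;
  scal : C -> carrier -> carrier;
  mul : carrier -> carrier -> carrier;
  star : carrier -> carrier;
  norm : carrier -> R;
  phi : carrier -> C;
  add_assoc : forall x y z, add x (add y z) = add (add x y) z;
  add_comm : forall x y, add x y = add y x;
  add_zero : forall x, add x zero = x;
  add_opp : forall x, add x (opp x) = zero;
  scal_assoc : forall a b x, scal a (scal b x) = scal (Cmul a b) x;
  scal_one : forall x, scal C1 x = x;
  scal_add_l : forall a b x, scal (Cadd a b) x = add (scal a x) (scal b x);
  scal_add_r : forall a x y, scal a (add x y) = add (scal a x) (scal a y);
  mul_assoc : forall x y z, mul x (mul y z) = mul (mul x y) z;
  mul_one_l : forall x, mul one x = x;
  mul_one_r : forall x, mul x one = x;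
  mul_add_l : forall x y z, mul (add x y) z = add (mul x z) (mul y z);
  mul_add_r : forall x y z, mul x (add y z) = add (mul x y) (mul x z);
  mul_scal_l : forall a x y, mul (scal a x) y = scal a (mul x y);
  mul_scal_r : forall a x y, mul x (scal a y) = scal a (mul x y);
  star_add : forall x y, star (add x y) = add (star x) (star y);
  star_scal : forall a x, star (scal a x) = scal (Cconj a) (star x);
  star_mul : forall x y, star (mul x y) = mul (star y) (star x);
  star_star : forall x, star (star x) = x;
  norm_nonneg : forall x, 0 <= norm x;
  norm_zero : forall x, norm x = 0 <-> x = zero;
  norm_triangle : forall x y, norm (add x y) <= norm x + norm y;
  norm_scal : forall a x, norm (scal a x) = Cmod a * norm x;
  norm_mul : forall x y, norm (mul x y) <= norm x * norm y;
  norm_cstar : forall x, norm (mul (star x) x) = norm x ^ 2;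
  complete : forall u : nat -> carrier,
    (forall eps, 0 < eps -> exists N, forall m n, (N <= m)%nat -> (N <= n)%nat ->
        norm (add (u m) (opp (u n))) < eps) ->
    exists l, forall eps, 0 < eps -> exists N, forall n, (N <= n)%nat ->
        norm (add (u n) (opp l)) < eps;
  phi_add : forall x y, phi (add x y) = Cadd (phi x) (phi y);
  phi_scal : forall a x, phi (scal a x) = Cmul a (phi x);
  phi_one : phi one = C1;
  phi_trace : forall x y, phi (mul x y) = phi (mul y x);
  phi_pos : forall x, 0 <= Re (phi (mul (star x) x)) /\ Im (phi (mul (star x) x)) = 0;
  phi_faithful : forall x, phi (mul (star x) x) = C0 -> x = zero
}.

(* All pairings of the list l (pairs (x,y) with x before y in l); n is fuel. *)
Fixpoint pairings (n : nat) (l : list nat) : list (list (nat * nat)) :=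
  match l with
  | [] => [[]]
  | x :: rest =>
      match n with
      | O => []
      | Datatypes.S n' =>
          flat_map (fun y => map (cons (x, y)) (pairings n' (remove Nat.eq_dec y rest))) rest
      end
  end.

Definition crossing (p q : nat * nat) : bool :=
  (fst p <? fst q)%nat && (fst q <? snd p)%nat && (snd p <? snd q)%nat.
Definition noncrossingb (pi : list (nat * nat)) : bool :=
  forallb (fun p => forallb (fun q => negb (crossing p q)) pi) pi.
Definition NC2 (r : nat) : list (list (nat * nat)) :=
  filter noncrossingb (pairings r (seq 1 r)).

(* (alpha, a, b) stands for alpha * 1_[a,b) ; a step function is a finite sum. *)
Definition step := list (R * R * R).
Definition valid_step (T : R) (h : step) : Prop :=
  Forall (fun x => let '(_, a, b) := x in (0 <= a < b /\ b <= T)) h.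

Section Constructions.
Variable NS : NCProbSpace.

Definition Asum (l : list NS) : NS := fold_right (add NS) (zero NS) l.
Definition Aprod (l : list NS) : NS := fold_right (mul NS) (one NS) l.
Definition Asub (x y : NS) : NS := add NS x (opp NS y).

(* algebraic tensor products, represented by formal sums of pure tensors;
   all maps below are the (multi)linear extensions from pure tensors *)
Definition T2 := list (NS * NS).
Definition T3 := list (NS * NS * NS).
Definition T2scal (c : C) (t : T2) : T2 := map (fun x => let '(a, b) := x in (scal NS c a, b)) t.
Definition T3scal (c : C) (t : T3) : T3 :=
  map (fun x => let '(a, b, d) := x in (scal NS c a, b, d)) t.
Definition T2mul (t u : T2) : T2 :=
  flat_map (fun x => let '(a, b) := x in
    map (fun y => let '(c, d) := y in (mul NS a c, mul NS b d)) u) t.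
Definition T2star (t : T2) : T2 := map (fun x => let '(a, b) := x in (star NS a, star NS b)) t.
Definition phiphi (t : T2) : C :=
  Csum (map (fun x => let '(a, b) := x in Cmul (phi NS a) (phi NS b)) t).
Definition sharp (t : T2) (G : NS) : NS :=
  Asum (map (fun x => let '(a, b) := x in mul NS a (mul NS G b)) t).
Definition IdphiId (t : T3) : NS :=
  Asum (map (fun x => let '(a, b, d) := x in scal NS (phi NS b) (mul NS a d)) t).

Definition is_centered_semicircular (T : R) (X : R -> NS) : Prop :=
  (forall t, 0 <= t <= T -> star NS (X t) = X t) /\
  (forall (r : nat) (ts : nat -> R),
     (forall i, (1 <= i <= r)%nat -> 0 <= ts i <= T) ->
     phi NS (Aprod (map (fun i => X (ts i)) (seq 1 r))) =
     if Nat.even r then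
       Csum (map (fun pi => Cprod (map (fun pq =>
                 phi NS (mul NS (X (ts (fst pq))) (X (ts (snd pq))))) pi)) (NC2 r))
     else C0).

Variable X : R -> NS.

Definition Xh (h : step) : NS :=
  Asum (map (fun x => let '(al, a, b) := x in scal NS (RtoC al) (Asub (X b) (X a))) h).

(* <1_[a,b), 1_[c,d)>_H, from <1_[0,s],1_[0,t]>_H = phi(X_s X_t) *)
Definition ind_ip (a b c d : R) : C :=
  Cadd (Csub (Csub (phi NS (mul NS (X b) (X d))) (phi NS (mul NS (X b) (X c))))
             (phi NS (mul NS (X a) (X d))))
       (phi NS (mul NS (X a) (X c))).
Definition ipH (h k : step) : C :=
  Csum (flat_map (fun x => let '(al, a, b) := x in
          map (fun y => let '(be, c, d) := y in Cmul (RtoC (al * be)) (ind_ip a b c d)) k) h).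

(* elements of A_X: formal C-linear combinations of words X(h_1)...X(h_m) *)
Definition AXpoly := list (C * list step).
Definition valid_poly (T : R) (p : AXpoly) : Prop :=
  Forall (fun x => Forall (valid_step T) (snd x)) p.
Definition evalP (p : AXpoly) : NS :=
  Asum (map (fun x => let '(c, w) := x in scal NS c (Aprod (map Xh w))) p).

(* D^X : A_X -> E([0,T]; A_X (x) A_X) *)
Definition DX_word (c : C) (w : list step) : list (T2 * step) :=
  map (fun i => ([(scal NS c (Aprod (map Xh (firstn i w))),
                   Aprod (map Xh (skipn (Datatypes.S i) w)))], nth i w []))
      (seq 0 (length w)).
Definition DX (p : AXpoly) : list (T2 * step) :=
  flat_map (fun x => let '(c, w) := x in DX_word c w) p.

(* elements of A_X (x) A_X: formal sums of F1 (x) F2 with F1, F2 in A_X *)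
Definition PT2 := list (AXpoly * AXpoly).
Definition evalPT2 (x : PT2) : T2 := map (fun y => let '(p1, p2) := y in (evalP p1, evalP p2)) x.

(* D^X = D^X_1 + D^X_2 on A_X (x) A_X, valued in E([0,T]; A_X^{(x)3}) *)
Definition DX2 (x : PT2) : list (T3 * step) :=
  flat_map (fun y => let '(p1, p2) := y in
     map (fun z => let '(t, k) := z in
            (map (fun ab => let '(a, b) := ab in (a, b, evalP p2)) t, k)) (DX p1)
  ++ map (fun z => let '(t, k) := z in
            (map (fun ab => let '(a, b) := ab in (evalP p1, a, b)) t, k)) (DX p2)) x.

Definition pairE3 (E : list (T3 * step)) (h : step) : T3 :=
  flat_map (fun z => let '(t, k) := z in T3scal (ipH k h) t) E.

(* E([0,T]; A_X (x) A_X) *)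
Definition EU := list (PT2 * step).
Definition valid_EU (T : R) (U : EU) : Prop :=
  Forall (fun z => valid_step T (snd z) /\
            Forall (fun y => valid_poly T (fst y) /\ valid_poly T (snd y)) (fst z)) U.

Definition deltaX (U : EU) : NS :=
  Asum (map (fun z => let '(x, h) := z in
     Asub (sharp (evalPT2 x) (Xh h)) (IdphiId (pairE3 (DX2 x) h))) U).

Definition EUstar (U : EU) : list (T2 * step) :=
  map (fun z => let '(x, h) := z in (T2star (evalPT2 x), h)) U.

Definition pairSemi (E F : list (T2 * step)) : T2 :=
  flat_map (fun z => let '(x, h) := z in
     flat_map (fun w => let '(y, k) := w in T2scal (ipH h k) (T2mul x y)) F) E.

End Constructions.

(* Main.v *)
From Stdlib Require Import Reals List Lra Lia Arith Sorting Bool.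
Import ListNotations.
Require Import Defs.
Open Scope R_scope.


Lemma Cext (a b : C) : Re a = Re b -> Im a = Im b -> a = b.
Proof. destruct a, b; simpl; intros; subst; reflexivity. Qed.

Lemma Cring_theory : ring_theory C0 C1 Cadd Cmul Csub Copp (@eq C).
Proof.
  constructor; intros; apply Cext; unfold Cadd, Cmul, Csub, Copp, C0, C1; simpl; ring.
Qed.
Add Ring Cring : Cring_theory.

Ltac cext := apply Cext; unfold Cadd, Cmul, Csub, Copp, Cconj, C0, C1, RtoC; simpl; try ring.

Lemma Cconj_add a b : Cconj (Cadd a b) = Cadd (Cconj a) (Cconj b). Proof. cext. Qed.
Lemma Cconj_mul a b : Cconj (Cmul a b) = Cmul (Cconj a) (Cconj b). Proof. cext. Qed.
Lemma Cconj_conj a : Cconj (Cconj a) = a. Proof. destruct a; cext. Qed.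
Lemma Cconj_RtoC r : Cconj (RtoC r) = RtoC r. Proof. cext. Qed.
Lemma Cconj_C0 : Cconj C0 = C0. Proof. cext. Qed.
Lemma Cconj_C1 : Cconj C1 = C1. Proof. cext. Qed.
Lemma Cconj_opp a : Cconj (Copp a) = Copp (Cconj a). Proof. cext. Qed.
Lemma RtoC_mul a b : RtoC (a*b) = Cmul (RtoC a) (RtoC b). Proof. cext. Qed.

Lemma Csum_app l1 l2 : Csum (l1 ++ l2) = Cadd (Csum l1) (Csum l2).
Proof. induction l1; simpl. ring. rewrite IHl1. ring. Qed.
Lemma Csum_rev l : Csum (rev l) = Csum l.
Proof. induction l; simpl. auto. rewrite Csum_app, IHl; simpl; ring. Qed.
Lemma Csum_map_add {A} (f g : A -> C) l :
  Csum (map (fun x => Cadd (f x) (g x)) l) = Cadd (Csum (map f l)) (Csum (map g l)).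
Proof. induction l; simpl. ring. rewrite IHl; ring. Qed.
Lemma Csum_map_mul_l {A} c (f : A -> C) l :
  Csum (map (fun x => Cmul c (f x)) l) = Cmul c (Csum (map f l)).
Proof. induction l; simpl. ring. rewrite IHl; ring. Qed.
Lemma Csum_map_zero {A} (l : list A) : Csum (map (fun _ => C0) l) = C0.
Proof. induction l; simpl; auto. rewrite IHl; ring. Qed.
Lemma Csum_map_ext {A} (f g : A -> C) l : (forall x, In x l -> f x = g x) ->
  Csum (map f l) = Csum (map g l).
Proof. intros H; f_equal; apply map_ext_in; auto. Qed.
Lemma Csum_flat_map {A B} (f : A -> list B) (g : B -> C) l :
  Csum (map g (flat_map f l)) = Csum (map (fun x => Csum (map g (f x))) l).
Proof. induction l; simpl; auto. rewrite map_app, Csum_app, IHl; auto. Qed.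
Lemma Csum_conj l : Cconj (Csum l) = Csum (map Cconj l).
Proof. induction l; simpl. cext. rewrite Cconj_add, IHl; auto. Qed.
Lemma Cprod_app l1 l2 : Cprod (l1 ++ l2) = Cmul (Cprod l1) (Cprod l2).
Proof. induction l1; simpl. ring. rewrite IHl1. ring. Qed.
Lemma Csum_flat {A} (f : A -> list C) l :
  Csum (flat_map f l) = Csum (map (fun x => Csum (f x)) l).
Proof. induction l; simpl; auto. rewrite Csum_app, IHl; auto. Qed.
Lemma Csum_map_mul_r {A} c (f : A -> C) l :
  Cmul (Csum (map f l)) c = Csum (map (fun x => Cmul (f x) c) l).
Proof. induction l; simpl. ring. rewrite <- IHl; ring. Qed.
Lemma Cmul_assoc_l a b c d : Cmul (Cmul a b) (Cmul c d) = Cmul a (Cmul d (Cmul b c)).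
Proof. ring. Qed.



Lemma add_zero_l (N : NCProbSpace) x : add N (zero N) x = x.
Proof. rewrite add_comm, add_zero; auto. Qed.

Lemma add_cancel_self (N : NCProbSpace) y : add N y y = y -> y = zero N.
Proof.
  intros H. assert (E: add N (add N y y) (opp N y) = add N y (opp N y)) by (rewrite H; auto).
  rewrite <- add_assoc, add_opp, add_zero in E. exact E.
Qed.

Lemma scal_C0 (N : NCProbSpace) x : scal N C0 x = zero N.
Proof.
  apply add_cancel_self. rewrite <- scal_add_l. f_equal. ring.
Qed.

Lemma scal_zero (N : NCProbSpace) c : scal N c (zero N) = zero N.
Proof.
  rewrite <- (scal_C0 N (zero N)), scal_assoc. f_equal. ring.
Qed.

Lemma opp_scal (N : NCProbSpace) x : opp N x = scal N (Copp C1) x.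
Proof.
  assert (E : add N x (scal N (Copp C1) x) = zero N).
  { rewrite <- (scal_one N x) at 1. rewrite <- scal_add_l.
    replace (Cadd C1 (Copp C1)) with C0 by ring. apply scal_C0. }
  assert (E2: add N (opp N x) (add N x (scal N (Copp C1) x)) = opp N x).
  { rewrite E, add_zero; auto. }
  rewrite add_assoc, (add_comm N (opp N x) x), add_opp, add_zero_l in E2. auto.
Qed.

Lemma mul_zero_l (N : NCProbSpace) x : mul N (zero N) x = zero N.
Proof. rewrite <- (scal_C0 N (zero N)), mul_scal_l, !scal_C0. auto. Qed.
Lemma mul_zero_r (N : NCProbSpace) x : mul N x (zero N) = zero N.
Proof. rewrite <- (scal_C0 N (zero N)), mul_scal_r, !scal_C0. auto. Qed.
Lemma phi_zero (N : NCProbSpace) : phi N (zero N) = C0.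
Proof. rewrite <- (scal_C0 N (zero N)), phi_scal. ring. Qed.
Lemma star_zero (N : NCProbSpace) : star N (zero N) = zero N.
Proof. rewrite <- (scal_C0 N (zero N)), star_scal, Cconj_C0, !scal_C0. auto. Qed.
Lemma star_one (N : NCProbSpace) : star N (one N) = one N.
Proof.
  rewrite <- (star_star N (one N)) at 2.
  rewrite <- (mul_one_r N (star N (one N))) at 2.
  rewrite star_mul, star_star, mul_one_r. auto.
Qed.

Lemma Asub_scal (N : NCProbSpace) a b : Asub N a b = add N a (scal N (Copp C1) b).
Proof. unfold Asub; rewrite opp_scal; auto. Qed.

Lemma phi_star (N : NCProbSpace) x : phi N (star N x) = Cconj (phi N x).
Proof.
  assert (H1 := proj2 (phi_pos N (add N (one N) x))).
  assert (H2 := proj2 (phi_pos N (add N (one N) (scal N (mkC 0 1) x)))).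
  assert (H0 := proj2 (phi_pos N x)).
  repeat (rewrite ?star_add, ?star_scal, ?star_one, ?mul_add_l, ?mul_add_r, ?mul_one_l, ?mul_one_r,
    ?mul_scal_l, ?mul_scal_r, ?phi_add, ?phi_scal, ?scal_assoc, ?phi_scal, ?phi_one in H1).
  repeat (rewrite ?star_add, ?star_scal, ?star_one, ?mul_add_l, ?mul_add_r, ?mul_one_l, ?mul_one_r,
    ?mul_scal_l, ?mul_scal_r, ?phi_add, ?phi_scal, ?scal_assoc, ?phi_scal, ?phi_one in H2).
  destruct (phi N (star N x)) as [a b], (phi N x) as [c d], (phi N (mul N (star N x) x)) as [e f].
  unfold Cconj, Cadd, Cmul, C1 in *; simpl in *. apply Cext; simpl; lra.
Qed.


Lemma Asum_app (N : NCProbSpace) l1 l2 : Asum N (l1 ++ l2) = add N (Asum N l1) (Asum N l2).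
Proof. induction l1; simpl. rewrite add_zero_l; auto. rewrite IHl1, add_assoc; auto. Qed.
Lemma phi_Asum (N : NCProbSpace) l : phi N (Asum N l) = Csum (map (phi N) l).
Proof. induction l; simpl. apply phi_zero. rewrite phi_add, IHl; auto. Qed.
Lemma mul_Asum_l (N : NCProbSpace) l y : mul N (Asum N l) y = Asum N (map (fun x => mul N x y) l).
Proof. induction l; simpl. apply mul_zero_l. rewrite mul_add_l, IHl; auto. Qed.
Lemma mul_Asum_r (N : NCProbSpace) l y : mul N y (Asum N l) = Asum N (map (fun x => mul N y x) l).
Proof. induction l; simpl. apply mul_zero_r. rewrite mul_add_r, IHl; auto. Qed.
Lemma star_Asum (N : NCProbSpace) l : star N (Asum N l) = Asum N (map (star N) l).
Proof. induction l; simpl. apply star_zero. rewrite star_add, IHl; auto. Qed.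
Lemma Aprod_app (N : NCProbSpace) l1 l2 : Aprod N (l1 ++ l2) = mul N (Aprod N l1) (Aprod N l2).
Proof. induction l1; simpl. rewrite mul_one_l; auto. rewrite IHl1, mul_assoc; auto. Qed.
Lemma star_Aprod (N : NCProbSpace) l : star N (Aprod N l) = Aprod N (rev (map (star N) l)).
Proof. induction l; simpl. apply star_one. rewrite star_mul, IHl, Aprod_app; simpl.
  rewrite mul_one_r; auto. Qed.
Lemma Asum_map_scal (N : NCProbSpace) {A} (f : A -> N) c l :
  Asum N (map (fun x => scal N c (f x)) l) = scal N c (Asum N (map f l)).
Proof. induction l; simpl. rewrite scal_zero; auto. rewrite IHl, scal_add_r; auto. Qed.

Lemma phi_cyc (N : NCProbSpace) a b c : phi N (mul N a (mul N b c)) = phi N (mul N c (mul N a b)).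
Proof. rewrite mul_assoc, phi_trace; auto. Qed.

Definition Xstep_selfadj (NS : NCProbSpace) (T : R) (X : R -> NS) :=
  forall t, 0 <= t <= T -> star NS (X t) = X t.

Lemma star_Xh (NS : NCProbSpace) T X h : Xstep_selfadj NS T X -> valid_step T h ->
  star NS (Xh NS X h) = Xh NS X h.
Proof.
  intros HS Hv. unfold Xh. rewrite star_Asum, map_map. f_equal. apply map_ext_in.
  intros [[al a] b] Hin. unfold valid_step in Hv; rewrite Forall_forall in Hv. specialize (Hv _ Hin). simpl in Hv.
  unfold Asub. rewrite star_scal, Cconj_RtoC, star_add, opp_scal, star_scal, !HS by lra.
  rewrite Cconj_opp, Cconj_C1. auto.
Qed.

Definition W (NS : NCProbSpace) (X : R -> NS) (v : list step) : NS := Aprod NS (map (Xh NS X) v).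

Lemma W_app NS X v1 v2 : W NS X (v1 ++ v2) = mul NS (W NS X v1) (W NS X v2).
Proof. unfold W. rewrite map_app, Aprod_app; auto. Qed.

Lemma star_W NS T X v : Xstep_selfadj NS T X -> Forall (valid_step T) v ->
  star NS (W NS X v) = W NS X (rev v).
Proof.
  intros HS Hv. unfold W. rewrite star_Aprod, map_map, map_rev. f_equal. f_equal.
  apply map_ext_in. intros h Hin. rewrite Forall_forall in Hv. apply (star_Xh NS T); auto.
Qed.

Lemma phi_Xh_Xh NS X h k : phi NS (mul NS (Xh NS X h) (Xh NS X k)) = ipH NS X h k.
Proof.
  unfold Xh, ipH. rewrite mul_Asum_l, phi_Asum, !map_map, Csum_flat.
  f_equal. apply map_ext. intros [[al a] b].
  rewrite mul_Asum_r, phi_Asum, !map_map. f_equal. apply map_ext. intros [[be c] d].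
  unfold Asub, ind_ip, Csub. rewrite !opp_scal, mul_scal_l, mul_scal_r, !mul_add_l, !mul_add_r,
    !mul_scal_l, !mul_scal_r, !phi_scal, !phi_add, !phi_scal, RtoC_mul. ring.
Qed.

Lemma ipH_sym NS X h k : ipH NS X h k = ipH NS X k h.
Proof. rewrite <- !phi_Xh_Xh, phi_trace; auto. Qed.

Lemma ipH_real NS T X h k : Xstep_selfadj NS T X -> valid_step T h -> valid_step T k ->
  Cconj (ipH NS X h k) = ipH NS X h k.
Proof.
  intros. rewrite <- phi_Xh_Xh, <- phi_star, star_mul, !(star_Xh NS T) by auto.
  rewrite phi_trace; auto.
Qed.


Fixpoint splits {A} (l : list A) : list (list A * A * list A) :=
  match l with
  | [] => []
  | x :: r => ([], x, r) :: map (fun '(a, y, b) => (x :: a, y, b)) (splits r)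
  end.

Lemma splits_in {A} (l : list A) a y b : In (a, y, b) (splits l) -> l = a ++ y :: b.
Proof.
  revert a y b; induction l as [|x r IH]; simpl; intros a y b H; [contradiction|].
  destruct H as [H|H]. inversion H; auto.
  apply in_map_iff in H. destruct H as [[[a' y'] b'] [E H]]. inversion E; subst.
  rewrite (IH _ _ _ H); auto.
Qed.

Lemma splits_app {A} (l1 l2 : list A) : splits (l1 ++ l2) =
  map (fun '(a, y, b) => (a, y, b ++ l2)) (splits l1) ++ map (fun '(a, y, b) => (l1 ++ a, y, b)) (splits l2).
Proof.
  induction l1 as [|x r IH]; simpl.
  - rewrite <- (map_id (splits l2)) at 1. apply map_ext. intros [[a y] b]; auto.
  - rewrite IH, map_app, !map_map. f_equal. f_equal; apply map_ext; intros [[a y] b]; auto.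
Qed.

Lemma splits_map {A B} (f : A -> B) l : splits (map f l) =
  map (fun '(a, y, b) => (map f a, f y, map f b)) (splits l).
Proof.
  induction l as [|x r IH]; simpl; auto. rewrite IH, !map_map. f_equal.
  apply map_ext; intros [[a y] b]; auto.
Qed.

Lemma splits_rev {A} (l : list A) : splits (rev l) =
  rev (map (fun '(a, y, b) => (rev b, y, rev a)) (splits l)).
Proof.
  induction l as [|x r IH]; simpl; auto. rewrite splits_app, IH. simpl.
  rewrite map_rev, map_map, app_nil_r, map_map. f_equal. f_equal.
  apply map_ext; intros [[a y] b]; auto.
Qed.

Fixpoint Ff {A} (c : A -> A -> C) (n : nat) (l : list A) : C :=
  match l with
  | [] => C1
  | x :: r => match n with
              | O => C0
              | S n' => Csum (map (fun '(a, y, b) => Cmul (c x y) (Cmul (Ff c n' a) (Ff c n' b))) (splits r))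
              end
  end.

Lemma splits_len {A} (l : list A) a y b : In (a, y, b) (splits l) ->
  length l = S (length a + length b).
Proof. intros H; rewrite (splits_in _ _ _ _ H), length_app; simpl; lia. Qed.

Lemma Ff_fuel {A} (c : A -> A -> C) n : forall m l, (length l <= n)%nat -> (length l <= m)%nat ->
  Ff c n l = Ff c m l.
Proof.
  induction n as [|n IH]; intros m l H1 H2.
  - destruct l; simpl in *; [destruct m; auto | lia].
  - destruct l as [|x r]; [destruct m; auto|]. destruct m as [|m]; [simpl in H2; lia|].
    simpl. apply Csum_map_ext. intros [[a y] b] Hin. apply splits_len in Hin.
    simpl in H1, H2. rewrite (IH m a), (IH m b); auto; lia.
Qed.

Lemma Ff_unfold {A} (c : A -> A -> C) x r :
  Ff c (length (x :: r)) (x :: r) =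
  Csum (map (fun '(a, y, b) => Cmul (c x y) (Cmul (Ff c (length a) a) (Ff c (length b) b))) (splits r)).
Proof.
  simpl. apply Csum_map_ext. intros [[a y] b] Hin. apply splits_len in Hin.
  rewrite (Ff_fuel c (length r) (length a) a), (Ff_fuel c (length r) (length b) b); auto; lia.
Qed.

Lemma Ff_map {A B} (c : B -> B -> C) (f : A -> B) n l :
  Ff c n (map f l) = Ff (fun i j => c (f i) (f j)) n l.
Proof.
  revert l; induction n as [|n IH]; intros l; destruct l as [|x r]; simpl; auto.
  rewrite splits_map, map_map. apply Csum_map_ext. intros [[a y] b] _. rewrite !IH; auto.
Qed.


Definition SSn := StronglySorted lt.

Lemma SS_app_iff (l1 l2 : list nat) : SSn (l1 ++ l2) <->
  SSn l1 /\ SSn l2 /\ (forall u v, In u l1 -> In v l2 -> (u < v)%nat).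
Proof.
  induction l1 as [|x r IH]; simpl.
  - split; [intros H; repeat split; auto; [constructor|tauto] | tauto].
  - split.
    + intros H. apply StronglySorted_inv in H as [H1 H2]. apply IH in H1 as [A1 [A2 A3]].
      rewrite Forall_forall in H2. repeat split; auto.
      * constructor; auto. rewrite Forall_forall; intros; apply H2, in_or_app; auto.
      * intros u v [E|E] Hv; subst; auto. apply H2, in_or_app; auto.
    + intros [A1 [A2 A3]]. apply StronglySorted_inv in A1 as [B1 B2]. constructor.
      * apply IH; repeat split; auto.
      * rewrite Forall_forall in *. intros z Hz. apply in_app_or in Hz as [Hz|Hz]; auto.
Qed.

Lemma SS_cons_iff (x : nat) l : SSn (x :: l) <-> SSn l /\ (forall u, In u l -> (x < u)%nat).
Proof.
  split. intros H; apply StronglySorted_inv in H as [H1 H2]; rewrite Forall_forall in H2; auto.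
  intros [H1 H2]; constructor; auto; rewrite Forall_forall; auto.
Qed.

Lemma SS_remove (l : list nat) y : SSn l -> SSn (remove Nat.eq_dec y l).
Proof.
  induction l as [|x r IH]; simpl; intros H; auto.
  apply SS_cons_iff in H as [H1 H2]. destruct (Nat.eq_dec y x); auto.
  apply SS_cons_iff; split; auto. intros u Hu. apply in_remove in Hu as [Hu _]; auto.
Qed.

Lemma SS_nodup (l : list nat) : SSn l -> NoDup l.
Proof.
  induction l as [|x r IH]; intros H; constructor.
  - apply SS_cons_iff in H as [_ H]. intros Hx; specialize (H _ Hx); lia.
  - apply IH. apply SS_cons_iff in H; tauto.
Qed.

Lemma pairings_in n : forall (l : list nat) pi q, SSn l -> In pi (pairings n l) -> In q pi ->
  In (fst q) l /\ In (snd q) l /\ (fst q < snd q)%nat.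
Proof.
  induction n as [|n IH]; intros l pi q HS Hpi Hq; destruct l as [|x rest]; simpl in Hpi.
  - destruct Hpi as [E|[]]; subst; destruct Hq.
  - destruct Hpi.
  - destruct Hpi as [E|[]]; subst; destruct Hq.
  - apply in_flat_map in Hpi as [y [Hy Hpi]]. apply in_map_iff in Hpi as [pi' [E Hpi']]. subst.
    apply SS_cons_iff in HS as [HS1 HS2].
    destruct Hq as [E|Hq].
    + subst; simpl. repeat split; auto.
    + destruct (IH _ _ _ (SS_remove _ y HS1) Hpi' Hq) as [A1 [A2 A3]].
      apply in_remove in A1, A2. simpl; tauto.
Qed.

Lemma flat_map_remove {B} (rest : list nat) : NoDup rest -> forall (g : nat -> list nat -> list B),
  flat_map (fun y => g y (remove Nat.eq_dec y rest)) rest =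
  flat_map (fun '(a, y, b) => g y (a ++ b)) (splits rest).
Proof.
  induction rest as [|x r IH]; intros HN g; simpl; auto.
  inversion HN as [|? ? Hx HN']; subst.
  destruct (Nat.eq_dec x x) as [_|C]; [|congruence].
  rewrite notin_remove by auto. f_equal.
  transitivity (flat_map (fun y => (fun y l => g y (x :: l)) y (remove Nat.eq_dec y r)) r).
  - rewrite !flat_map_concat_map. f_equal. apply map_ext_in. intros y Hy.
    destruct (Nat.eq_dec y x); [subst; contradiction|]. auto.
  - etransitivity; [apply (IH HN' (fun y l => g y (x :: l)))|]. rewrite !flat_map_concat_map, map_map. f_equal. apply map_ext. intros [[a y] b]. auto.
Qed.

Definition inb (x : nat) (l : list nat) : bool := existsb (Nat.eqb x) l.
Lemma inb_iff x l : inb x l = true <-> In x l.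
Proof.
  unfold inb. rewrite existsb_exists. split.
  - intros [y [Hy E]]. apply Nat.eqb_eq in E; subst; auto.
  - intros H; exists x; split; auto; apply Nat.eqb_refl.
Qed.
Definition sb (Ls : list (list nat)) (q : nat * nat) : bool :=
  existsb (fun L => inb (fst q) L && inb (snd q) L) Ls.
Definition Prodw (c : nat -> nat -> C) (pi : list (nat * nat)) : C :=
  Cprod (map (fun pq => c (fst pq) (snd pq)) pi).
Definition Sg (c : nat -> nat -> C) n Ls : C :=
  Csum (map (fun pi => if noncrossingb pi && forallb (sb Ls) pi then Prodw c pi else C0)
    (pairings n (concat Ls))).

Lemma forallb_andf {A} (f g : A -> bool) l :
  forallb (fun x => f x && g x) l = forallb f l && forallb g l.
Proof. induction l; simpl; auto. rewrite IHl. destruct (f a), (g a), (forallb f l), (forallb g l); auto. Qed.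

Lemma nc_cons p pi : noncrossingb (p :: pi) =
  negb (crossing p p) && forallb (fun q => negb (crossing p q) && negb (crossing q p)) pi && noncrossingb pi.
Proof.
  unfold noncrossingb. simpl. rewrite !forallb_andf.
  destruct (negb (crossing p p)), (forallb (fun q => negb (crossing p q)) pi),
    (forallb (fun x => negb (crossing x p)) pi),
    (forallb (fun x => forallb (fun q => negb (crossing x q)) pi) pi); auto.
Qed.

Lemma Sg_nil c n : Sg c n [] = C1.
Proof. unfold Sg, Prodw; destruct n; simpl; ring. Qed.

Lemma Sg_emp c n Ls : Sg c n ([] :: Ls) = Sg c n Ls.
Proof. unfold Sg. simpl concat. apply Csum_map_ext. intros pi _. reflexivity. Qed.

Lemma inb_app x l1 l2 : inb x (l1 ++ l2) = inb x l1 || inb x l2.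
Proof. unfold inb; apply existsb_app. Qed.

Lemma sb_in Ls c d : sb Ls (c, d) = true -> In c (concat Ls) /\ In d (concat Ls).
Proof.
  unfold sb; rewrite existsb_exists. intros [L [HL E]]. apply andb_true_iff in E as [E1 E2].
  simpl in *. apply inb_iff in E1, E2. split; apply in_concat; eauto.
Qed.

Ltac inbcase e := let H := fresh "Hb" in destruct e eqn:H;
  [apply inb_iff in H | apply not_true_iff_false in H; rewrite inb_iff in H].

Lemma cond_q x y a b Ls' c d : SSn (x :: a ++ y :: b ++ concat Ls') ->
  In c (a ++ b ++ concat Ls') -> In d (a ++ b ++ concat Ls') -> (c < d)%nat ->
  negb (crossing (x, y) (c, d)) && negb (crossing (c, d) (x, y)) && sb ((x :: a ++ y :: b) :: Ls') (c, d)
  = sb (a :: b :: Ls') (c, d).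
Proof.
  intros HS Hc Hd Hcd. set (R2 := concat Ls') in *.
  apply SS_cons_iff in HS as [HS Hx]. apply SS_app_iff in HS as [_ [HS2 Ha]].
  apply SS_cons_iff in HS2 as [_ Hy].
  assert (Hx' : forall u, In u (a ++ b ++ R2) -> (x < u)%nat).
  { intros u Hu. apply Hx. apply in_app_or in Hu as [Hu|Hu]; apply in_or_app; auto. right; right; auto. }
  assert (Ha' : forall u, In u a -> (u < y)%nat) by (intros; apply Ha; simpl; auto).
  assert (Hb' : forall u, In u b -> (y < u)%nat) by (intros; apply Hy, in_or_app; auto).
  assert (HR : forall u, In u R2 -> (y < u)%nat) by (intros; apply Hy, in_or_app; auto).
  assert (Hcx := Hx' c Hc). assert (Hdx := Hx' d Hd).
  assert (HSL := sb_in Ls' c d). unfold sb in HSL |- *. simpl existsb. simpl fst in *; simpl snd in *.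
  set (S := existsb (fun L : list nat => inb c L && inb d L) Ls') in *.
  unfold crossing; simpl fst; simpl snd.
  rewrite !inb_app. simpl inb.
  destruct (Nat.eqb_spec c x); [lia|]. destruct (Nat.eqb_spec d x); [lia|].
  destruct (Nat.eqb_spec c y) as [E|]; [subst c|].
  { exfalso. apply in_app_or in Hc as [Hc|Hc]; [apply Ha' in Hc; lia|].
    apply in_app_or in Hc as [Hc|Hc]; [apply Hb' in Hc; lia| apply HR in Hc; lia]. }
  destruct (Nat.eqb_spec d y) as [E|]; [subst d|].
  { exfalso. apply in_app_or in Hd as [Hd|Hd]; [apply Ha' in Hd; lia|].
    apply in_app_or in Hd as [Hd|Hd]; [apply Hb' in Hd; lia| apply HR in Hd; lia]. }
  destruct (Nat.ltb_spec x c); [|lia]. destruct (Nat.ltb_spec c x); [lia|].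
  simpl.
  destruct S.
  { destruct (HSL eq_refl) as [HL1 HL2].
    assert (y < c)%nat by (apply HR; auto).
    destruct (Nat.ltb_spec c y); [lia|]. simpl. rewrite !orb_true_r. auto. }
  clear HSL. rewrite !orb_false_r.
  assert (Hc2 : In c a \/ In c b \/ In c R2) by (apply in_app_or in Hc as [|Hc]; auto; apply in_app_or in Hc; tauto).
  assert (Hd2 : In d a \/ In d b \/ In d R2) by (apply in_app_or in Hd as [|Hd]; auto; apply in_app_or in Hd; tauto).
  inbcase (inb c a); inbcase (inb c b); inbcase (inb d a); inbcase (inb d b); simpl;
  try (destruct (Nat.ltb_spec c y); destruct (Nat.ltb_spec y d); simpl; auto);
  repeat match goal with
  | H : forall u, In u ?l -> _, H2 : In ?v ?l |- _ => let h := fresh in assert (h := H v H2); clear H2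
  end; try lia.
Qed.

Lemma cond_B x r1 Ls' y : SSn (x :: r1 ++ concat Ls') -> In y (concat Ls') ->
  sb ((x :: r1) :: Ls') (x, y) = false.
Proof.
  intros HS Hy. apply not_true_iff_false. intros H.
  unfold sb in H. simpl in H. rewrite Nat.eqb_refl in H. simpl in H.
  apply SS_cons_iff in HS as [HS Hx]. apply SS_app_iff in HS as [_ [_ H12]].
  apply orb_true_iff in H as [H|H].
  - destruct (Nat.eqb_spec y x) as [E|]. subst. assert (x < x)%nat by (apply Hx, in_or_app; auto). lia.
    simpl in H. apply inb_iff in H. specialize (H12 _ _ H Hy). lia.
  - assert (E := sb_in Ls' x y). unfold sb in E. simpl in E. destruct (E H) as [E1 _].
    assert (x < x)%nat by (apply Hx, in_or_app; auto). lia.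
Qed.

Lemma Cadd_C0_r z : Cadd z C0 = z. Proof. ring. Qed.

Lemma forallb_ext_in {A} (f g : A -> bool) l : (forall x, In x l -> f x = g x) -> forallb f l = forallb g l.
Proof. induction l; simpl; intros H; auto. rewrite H, IHl; auto. Qed.

Lemma forallb_cons {A} (f : A -> bool) x l : forallb f (x :: l) = f x && forallb f l.
Proof. reflexivity. Qed.

Lemma Sg_main c n x r1 Ls' :
  (forall Ls, (length (concat Ls) <= n)%nat -> SSn (concat Ls) ->
     Sg c n Ls = Cprod (map (fun L => Ff c (length L) L) Ls)) ->
  (length (x :: r1 ++ concat Ls') <= S n)%nat -> SSn (x :: r1 ++ concat Ls') ->
  Sg c (S n) ((x :: r1) :: Ls') = Cprod (map (fun L => Ff c (length L) L) ((x :: r1) :: Ls')).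
Proof.
  intros IH Hlen HS. set (R2 := concat Ls') in *.
  assert (HN : NoDup (r1 ++ R2)) by (apply SS_nodup; apply SS_cons_iff in HS; tauto).
  unfold Sg. simpl concat. fold R2. simpl pairings.
  rewrite (flat_map_remove _ HN (fun y l => map (cons (x, y)) (pairings n l))).
  rewrite Csum_flat_map, splits_app, map_app, Csum_app, !map_map.
  rewrite (Csum_map_ext _ (fun _ => C0) (splits R2)).
  2:{ intros [[a y] b] Hin. rewrite map_map.
      transitivity (Csum (map (fun _ => C0) (pairings n ((r1 ++ a) ++ b)))); [|apply Csum_map_zero].
      apply Csum_map_ext. intros pi _. rewrite forallb_cons.
      rewrite cond_B; auto. rewrite andb_false_r; auto.
      change (In y R2). rewrite (splits_in _ _ _ _ Hin). apply in_or_app; simpl; auto. }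
  rewrite Csum_map_zero. rewrite map_cons. cbn [Cprod fold_right]. rewrite Ff_unfold.
  rewrite Csum_map_mul_r. fold (Cprod (map (fun L => Ff c (length L) L) Ls')).
  set (P := Cprod (map (fun L => Ff c (length L) L) Ls')).
  rewrite Cadd_C0_r. apply Csum_map_ext. intros [[a y] b] Hin.
  assert (Er1 := splits_in _ _ _ _ Hin).
  rewrite map_map.
  assert (HS' : SSn (concat (a :: b :: Ls'))).
  { simpl concat. fold R2. rewrite Er1 in HS. apply SS_cons_iff in HS as [HS _].
    rewrite <- app_assoc in HS. apply SS_app_iff in HS as [H1 [H2 H3]].
    simpl in H2. apply SS_cons_iff in H2 as [H2 _]. apply SS_app_iff; repeat split; auto.
    intros u v Hu Hv. apply H3; simpl; auto. }
  assert (Hlen' : (length (concat (a :: b :: Ls')) <= n)%nat).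
  { simpl concat. fold R2. rewrite Er1 in Hlen. simpl in Hlen. rewrite !length_app in *. simpl in Hlen. lia. }
  assert (E := IH _ Hlen' HS'). unfold Sg in E. simpl concat in E. fold R2 in E.
  simpl map in E. cbn [Cprod fold_right] in E.
  transitivity (Cmul (c x y) (Sg c n (a :: b :: Ls'))).
  2:{ unfold Sg. simpl concat. fold R2. rewrite E. unfold P, Cprod. ring. }
  unfold Sg; simpl concat; fold R2. rewrite <- Csum_map_mul_l.
  apply Csum_map_ext. intros pi Hpi.
  rewrite nc_cons, forallb_cons.
  assert (Hsxy : sb ((x :: r1) :: Ls') (x, y) = true).
  { unfold sb. cbn [existsb fst snd]. apply orb_true_iff; left; apply andb_true_iff; split; apply inb_iff; simpl;
      [left; auto| right; rewrite Er1; apply in_or_app; simpl; auto]. }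
  rewrite Hsxy. unfold crossing at 1. simpl fst; simpl snd. rewrite Nat.ltb_irrefl. simpl negb.
  replace (true && forallb (fun q => negb (crossing (x, y) q) && negb (crossing q (x, y))) pi &&
      noncrossingb pi && (true && forallb (sb ((x :: r1) :: Ls')) pi))
    with (noncrossingb pi && forallb (fun q => negb (crossing (x, y) q) && negb (crossing q (x, y)) && sb ((x :: r1) :: Ls') q) pi)
    by (rewrite !forallb_andf; destruct (noncrossingb pi), (forallb (fun q => negb (crossing (x, y) q)) pi),
          (forallb (fun q => negb (crossing q (x, y))) pi), (forallb (sb ((x :: r1) :: Ls')) pi); auto).
  replace (forallb (fun q => negb (crossing (x, y) q) && negb (crossing q (x, y)) && sb ((x :: r1) :: Ls') q) pi)
    with (forallb (sb (a :: b :: Ls')) pi).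
  2:{ apply forallb_ext_in. intros [c0 d0] Hq. rewrite Er1.
      assert (HSl : SSn (a ++ b ++ R2)).
      { simpl in HS'. fold R2 in HS'. auto. }
      destruct (pairings_in _ _ _ _ HSl Hpi Hq) as [A1 [A2 A3]]. simpl in A1, A2, A3.
      symmetry. apply cond_q; auto. rewrite Er1 in HS. simpl in HS. rewrite <- app_assoc in HS. exact HS. }
  destruct (noncrossingb pi && forallb (sb (a :: b :: Ls')) pi); [|ring].
  unfold Prodw. simpl. ring.
Qed.

Lemma Gen c n : forall Ls, (length (concat Ls) <= n)%nat -> SSn (concat Ls) ->
  Sg c n Ls = Cprod (map (fun L => Ff c (length L) L) Ls).
Proof.
  induction n as [|n IH]; intros Ls; induction Ls as [|L Ls' IHL]; intros Hlen HS.
  - rewrite Sg_nil; auto.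
  - destruct L as [|x r1].
    + rewrite Sg_emp, IHL; auto. simpl; ring.
    + simpl in Hlen; lia.
  - rewrite Sg_nil; auto.
  - destruct L as [|x r1].
    + rewrite Sg_emp, IHL; auto. simpl; ring.
    + apply Sg_main; auto.
Qed.

Lemma SS_seq s r : SSn (seq s r).
Proof.
  revert s; induction r; intros s; simpl. constructor.
  apply SS_cons_iff; split; auto. intros u Hu. apply in_seq in Hu. lia.
Qed.

Lemma NC2_sum c r : Csum (map (fun pi => Cprod (map (fun pq => c (fst pq) (snd pq)) pi)) (NC2 r)) =
  Ff c r (seq 1 r).
Proof.
  assert (E := Gen c r [seq 1 r]). simpl concat in E. rewrite app_nil_r in E.
  rewrite length_seq in E. specialize (E (le_n _) (SS_seq 1 r)). simpl in E. rewrite length_seq in E.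
  transitivity (Cmul (Ff c r (seq 1 r)) C1); [|ring]. rewrite <- E.
  unfold Sg, NC2. simpl concat. rewrite app_nil_r.
  generalize (fun pi (q : nat * nat) Hpi Hq => pairings_in r (seq 1 r) pi q (SS_seq 1 r) Hpi Hq).
  induction (pairings r (seq 1 r)) as [|pi l IHl]; intros Hin; simpl; auto.
  replace (forallb (sb [seq 1 r]) pi) with true.
  2:{ symmetry. apply forallb_forall. intros [c0 d0] Hq. destruct (Hin pi _ (or_introl eq_refl) Hq) as [A1 [A2 _]].
      unfold sb. simpl. rewrite orb_false_r. apply andb_true_iff; split; apply inb_iff; auto. }
  rewrite andb_true_r. destruct (noncrossingb pi); simpl; rewrite IHl; [unfold Prodw; auto| |ring|];
  intros; eapply Hin; eauto; right; auto.
Qed.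


Lemma Ff_odd {A} (c : A -> A -> C) n : forall l, (length l <= n)%nat ->
  (exists m, length l = 2 * m + 1)%nat -> Ff c n l = C0.
Proof.
  induction n as [|n IH]; intros l Hl [m Hm]; destruct l as [|x r]; simpl in *; try lia; auto.
  rewrite <- (Csum_map_zero (splits r)). apply Csum_map_ext. intros [[a y] b] Hin.
  apply splits_len in Hin. destruct (Nat.Even_or_Odd (length a)) as [[p Hp]|[p Hp]].
  - rewrite (IH b); [ring|lia|]. exists (m - p - 1)%nat. lia.
  - rewrite (IH a); [ring|lia|]. exists p; lia.
Qed.

Lemma map_nth_seq (l : list R) : forall k, map (fun i => nth (i - k) l 0) (seq k (length l)) = l.
Proof.
  induction l as [|x r IH]; intros k; simpl; auto. rewrite Nat.sub_diag. f_equal.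
  rewrite <- (IH (S k)) at 2. apply map_ext_in. intros i Hi. apply in_seq in Hi.
  replace (i - k)%nat with (S (i - S k)) by lia. auto.
Qed.

Definition cX (NS : NCProbSpace) (X : R -> NS) (t s : R) : C := phi NS (mul NS (X t) (X s)).

Lemma moment_time NS T X : is_centered_semicircular NS T X -> forall ts,
  Forall (fun t => 0 <= t <= T) ts ->
  phi NS (Aprod NS (map X ts)) = Ff (cX NS X) (length ts) ts.
Proof.
  intros [_ HW] ts Hts. set (r := length ts). set (tsf := fun i => nth (i - 1) ts 0).
  assert (E1 : map (fun i => X (tsf i)) (seq 1 r) = map X ts).
  { rewrite <- (map_map tsf X). unfold tsf, r. rewrite map_nth_seq. auto. }
  assert (Hr : forall i, (1 <= i <= r)%nat -> 0 <= tsf i <= T).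
  { intros i Hi. rewrite Forall_forall in Hts. apply Hts. unfold tsf. apply nth_In. unfold r in Hi. lia. }
  rewrite <- E1, (HW r tsf Hr).
  destruct (Nat.even r) eqn:Ev.
  - rewrite (NC2_sum (fun i j => phi NS (mul NS (X (tsf i)) (X (tsf j))))).
    rewrite <- (Ff_map (cX NS X) tsf). unfold tsf, r. rewrite map_nth_seq. auto.
  - symmetry. apply Ff_odd; auto. destruct (Nat.Even_or_Odd r) as [[p Hp]|[p Hp]].
    + exfalso. rewrite Hp, Nat.even_mul in Ev. simpl in Ev. discriminate.
    + exists p. fold r. lia.
Qed.

Lemma rec_time NS T X : is_centered_semicircular NS T X -> forall t0 ts,
  0 <= t0 <= T -> Forall (fun t => 0 <= t <= T) ts ->
  phi NS (mul NS (X t0) (Aprod NS (map X ts))) =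
  Csum (map (fun '(a, s, b) => Cmul (cX NS X t0 s)
     (Cmul (phi NS (Aprod NS (map X a))) (phi NS (Aprod NS (map X b))))) (splits ts)).
Proof.
  intros HX t0 ts H0 Hts.
  change (mul NS (X t0) (Aprod NS (map X ts))) with (Aprod NS (map X (t0 :: ts))).
  rewrite (moment_time NS T X HX) by (constructor; auto).
  rewrite Ff_unfold. apply Csum_map_ext. intros [[a s] b] Hin.
  apply splits_in in Hin. subst ts.
  rewrite (moment_time NS T X HX a), (moment_time NS T X HX b); auto;
  rewrite Forall_forall in *; intros; apply Hts; apply in_or_app; simpl; auto.
Qed.


Definition lin (NS : NCProbSpace) (f : NS -> C) : Prop :=
  (forall x y, f (add NS x y) = Cadd (f x) (f y)) /\ (forall c x, f (scal NS c x) = Cmul c (f x)).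

Lemma lin_ext (NS : NCProbSpace) (f g : NS -> C) : (forall z, f z = g z) -> lin NS g -> lin NS f.
Proof. intros E [H1 H2]; split; intros; rewrite !E; auto. Qed.
Lemma lin_add (NS : NCProbSpace) f g : lin NS f -> lin NS g -> lin NS (fun z => Cadd (f z) (g z)).
Proof. intros [A1 A2] [B1 B2]; split; intros; rewrite ?A1, ?A2, ?B1, ?B2; ring. Qed.
Lemma lin_sub (NS : NCProbSpace) f g : lin NS f -> lin NS g -> lin NS (fun z => Csub (f z) (g z)).
Proof. intros [A1 A2] [B1 B2]; split; intros; unfold Csub; rewrite ?A1, ?A2, ?B1, ?B2; ring. Qed.
Lemma lin_mulK (NS : NCProbSpace) f K : lin NS f -> lin NS (fun z => Cmul K (f z)).
Proof. intros [A1 A2]; split; intros; rewrite ?A1, ?A2; ring. Qed.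
Lemma lin_Kmul (NS : NCProbSpace) f K : lin NS f -> lin NS (fun z => Cmul (f z) K).
Proof. intros [A1 A2]; split; intros; rewrite ?A1, ?A2; ring. Qed.
Lemma lin_Csum (NS : NCProbSpace) {A} (F : A -> NS -> C) l : (forall e, In e l -> lin NS (F e)) ->
  lin NS (fun z => Csum (map (fun e => F e z) l)).
Proof.
  induction l as [|e l IH]; intros H; simpl.
  - split; intros; ring.
  - apply (lin_add NS (F e) (fun z => Csum (map (fun e0 => F e0 z) l))); [apply H; simpl; auto | apply IH; intros; apply H; simpl; auto].
Qed.
Lemma lin_phi_mid (NS : NCProbSpace) p q : lin NS (fun z => phi NS (Aprod NS (p ++ z :: q))).
Proof.
  split; intros; rewrite !Aprod_app; simpl.
  - rewrite mul_add_l, mul_add_r, phi_add; auto.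
  - rewrite mul_scal_l, mul_scal_r, phi_scal; auto.
Qed.
Lemma lin_phi_mul_r (NS : NCProbSpace) g : lin NS (fun z => phi NS (mul NS z g)).
Proof.
  split; intros.
  - rewrite mul_add_l, phi_add; auto.
  - rewrite mul_scal_l, phi_scal; auto.
Qed.
Lemma lin_phi_mul_l (NS : NCProbSpace) g : lin NS (fun z => phi NS (mul NS g z)).
Proof.
  split; intros.
  - rewrite mul_add_r, phi_add; auto.
  - rewrite mul_scal_r, phi_scal; auto.
Qed.

Definition valg (NS : NCProbSpace) (v : list (C * NS)) : NS :=
  Asum NS (map (fun p => scal NS (fst p) (snd p)) v).

Lemma span_vanish (NS : NCProbSpace) (G : list NS -> C) (gen : NS -> Prop) :
  (forall l1 l2, lin NS (fun z => G (l1 ++ z :: l2))) ->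
  (forall l, Forall gen l -> G l = C0) ->
  forall vs, Forall (Forall (fun p => gen (snd p))) vs -> G (map (valg NS) vs) = C0.
Proof.
  intros Hlin Hgen vs Hvs.
  enough (H : forall pre, Forall gen pre -> G (pre ++ map (valg NS) vs) = C0)
    by (apply (H []); constructor).
  induction vs as [|v vs IH]; intros pre Hpre; simpl.
  - rewrite app_nil_r; auto.
  - inversion Hvs as [|? ? Hv Hvs']; subst. specialize (IH Hvs').
    induction v as [|[c g] v IHv]; simpl.
    + unfold valg; simpl. rewrite <- (scal_C0 NS (zero NS)).
      rewrite (proj2 (Hlin pre (map (valg NS) vs))). ring.
    + inversion Hv as [|? ? Hg Hv']; subst. unfold valg; simpl.
      rewrite (proj1 (Hlin pre (map (valg NS) vs))), (proj2 (Hlin pre (map (valg NS) vs))).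
      fold (valg NS v). rewrite IHv by auto.
      replace (pre ++ g :: map (valg NS) vs) with ((pre ++ [g]) ++ map (valg NS) vs)
        by (rewrite <- app_assoc; auto).
      rewrite IH. ring. apply Forall_app; split; auto.
Qed.

Definition Gmom (NS : NCProbSpace) (l : list NS) : C :=
  match l with
  | [] => C0
  | u0 :: us => Csub (phi NS (Aprod NS (u0 :: us)))
      (Csum (map (fun '(a, g, b) => Cmul (phi NS (mul NS u0 g))
          (Cmul (phi NS (Aprod NS a)) (phi NS (Aprod NS b)))) (splits us)))
  end.

Lemma Gmom_lin (NS : NCProbSpace) l1 l2 : lin NS (fun z => Gmom NS (l1 ++ z :: l2)).
Proof.
  destruct l1 as [|u0 l1'].
  - apply (lin_ext NS _ (fun z => Csub (phi NS (Aprod NS ([] ++ z :: l2)))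
       (Csum (map (fun e => (fun e z => let '(a, g, b) := e in Cmul (phi NS (mul NS z g))
          (Cmul (phi NS (Aprod NS a)) (phi NS (Aprod NS b)))) e z) (splits l2))))).
    { intros z; reflexivity. }
    apply lin_sub; [apply lin_phi_mid|]. apply lin_Csum. intros [[a g] b] _.
    apply lin_Kmul, lin_phi_mul_r.
  - apply (lin_ext NS _ (fun z => Csub (phi NS (Aprod NS ((u0 :: l1') ++ z :: l2)))
       (Cadd (Csum (map (fun e => (fun e z => let '(a, g, b) := e in Cmul (phi NS (mul NS u0 g))
                 (Cmul (phi NS (Aprod NS a)) (phi NS (Aprod NS (b ++ z :: l2))))) e z) (splits l1')))
       (Cadd (Cmul (phi NS (mul NS u0 z)) (Cmul (phi NS (Aprod NS l1')) (phi NS (Aprod NS l2))))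
             (Csum (map (fun e => (fun e z => let '(a, g, b) := e in Cmul (phi NS (mul NS u0 g))
                 (Cmul (phi NS (Aprod NS (l1' ++ z :: a))) (phi NS (Aprod NS b)))) e z) (splits l2))))))).
    { intros z. simpl Gmom. rewrite splits_app. simpl splits. rewrite map_app, Csum_app. simpl map.
      rewrite !map_map. f_equal. simpl Csum. rewrite app_nil_r. f_equal.
      - apply Csum_map_ext. intros [[a g] b] _. auto.
      - f_equal. apply Csum_map_ext. intros [[a g] b] _. auto. }
    apply lin_sub; [apply lin_phi_mid|]. apply lin_add; [|apply lin_add].
    + apply lin_Csum. intros [[a g] b] _. apply lin_mulK, lin_mulK, lin_phi_mid.
    + apply lin_Kmul, lin_phi_mul_l.
    + apply lin_Csum. intros [[a g] b] _. apply lin_mulK, lin_Kmul, lin_phi_mid.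
Qed.

Definition gens (NS : NCProbSpace) (X : R -> NS) (h : step) : list (C * NS) :=
  flat_map (fun '(al, a, b) => [(RtoC al, X b); (RtoC (- al), X a)]) h.

Lemma valg_gens (NS : NCProbSpace) X h : valg NS (gens NS X h) = Xh NS X h.
Proof.
  unfold valg, gens, Xh. induction h as [|[[al a] b] h IH]; simpl; auto.
  rewrite IH. simpl. rewrite add_assoc. f_equal. unfold Asub. rewrite opp_scal, scal_add_r, scal_assoc.
  f_equal. f_equal. cext.
Qed.

Lemma gen_extract (NS : NCProbSpace) (T : R) (X : R -> NS) (l : list NS) :
  Forall (fun x => exists t, 0 <= t <= T /\ x = X t) l ->
  exists ts, l = map X ts /\ Forall (fun t => 0 <= t <= T) ts.
Proof.
  induction l as [|x l IH]; intros H. exists (@nil R); split; auto.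
  inversion H as [|? ? [t [Ht E]] H']; subst. destruct (IH H') as [ts [E Hts]].
  exists (t :: ts); split; simpl; [rewrite E|]; auto.
Qed.

Lemma rec_step (NS : NCProbSpace) T X : is_centered_semicircular NS T X -> forall k vs,
  valid_step T k -> Forall (valid_step T) vs ->
  phi NS (mul NS (Xh NS X k) (W NS X vs)) =
  Csum (map (fun '(a, g, b) => Cmul (ipH NS X k g) (Cmul (phi NS (W NS X a)) (phi NS (W NS X b)))) (splits vs)).
Proof.
  intros HX k vs Hk Hvs.
  assert (Hgen : forall l, Forall (fun x => exists t, 0 <= t <= T /\ x = X t) l -> Gmom NS l = C0).
  { intros l Hl. destruct (gen_extract NS T X l Hl) as [ts [El Hts]]. subst l.
    destruct ts as [|t0 ts]; simpl; auto.
    inversion Hts; subst.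
    rewrite splits_map, map_map. unfold Csub.
    change (mul NS (X t0) (Aprod NS (map X ts))) with (Aprod NS (map X (t0 :: ts))).
    simpl map. cbn [Aprod fold_right]. fold (Aprod NS (map X ts)).
    rewrite (rec_time NS T X HX t0 ts) by auto.
    match goal with |- Cadd ?A (Copp ?B) = _ => replace B with A; [ring|] end.
    apply Csum_map_ext. intros [[a s] b] _. auto. }
  assert (Hg : forall h, valid_step T h -> Forall (fun p => exists t, 0 <= t <= T /\ snd p = X t) (gens NS X h)).
  { intros h Hh. unfold valid_step in Hh. unfold gens. induction Hh as [|[[al a] b] h [[H1 H2] H3] Hh IH]; simpl; auto.
    constructor; [exists b; split; auto; lra|]. constructor; [exists a; split; auto; lra|]. auto. }
  assert (E := span_vanish NS (Gmom NS) (fun x => exists t, 0 <= t <= T /\ x = X t)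
     (Gmom_lin NS) Hgen (map (gens NS X) (k :: vs))).
  rewrite map_map in E.
  rewrite (map_ext _ _ (valg_gens NS X)) in E.
  simpl in E. unfold W. rewrite splits_map, map_map in E.
  specialize (E (Forall_cons _ (Hg k Hk) (proj2 (Forall_map _ _ _) (Forall_impl _ Hg Hvs)))).
  unfold Csub in E.
  match goal with
  | E : Cadd ?A (Copp ?B) = C0 |- ?A = ?D =>
     transitivity B; [transitivity (Cadd (Cadd A (Copp B)) B); [ring|]; rewrite E; ring|apply Csum_map_ext]
  end.
  - intros [[a g] b] _. rewrite phi_Xh_Xh. auto.
Qed.


Definition Lc (NS : NCProbSpace) (X : R -> NS) (w1 : list step) (h : step) : NS :=
  Asum NS (map (fun '(a, g, b) => scal NS (Cmul (ipH NS X g h) (phi NS (W NS X b))) (W NS X a)) (splits w1)).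
Definition Rc (NS : NCProbSpace) (X : R -> NS) (w2 : list step) (h : step) : NS :=
  Asum NS (map (fun '(a, g, b) => scal NS (Cmul (ipH NS X g h) (phi NS (W NS X a))) (W NS X b)) (splits w2)).
Definition LHSv (NS : NCProbSpace) (X : R -> NS) (w : list step) (h : step) (P1 L1 P2 R2 : NS) : C :=
  phi NS (mul NS (W NS X w) (star NS (Asub NS (mul NS P1 (mul NS (Xh NS X h) P2))
      (add NS (mul NS L1 P2) (mul NS P1 R2))))).
Definition RHSv (NS : NCProbSpace) (X : R -> NS) (w : list step) (h : step) (P1 P2 : NS) : C :=
  Csum (map (fun '(a, g, b) => Cmul (ipH NS X g h)
     (Cmul (phi NS (mul NS (W NS X a) (star NS P1))) (phi NS (mul NS (W NS X b) (star NS P2))))) (splits w)).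

Definition Mw (NS : NCProbSpace) (X : R -> NS) v := phi NS (W NS X v).

Lemma phi_swap3 (NS : NCProbSpace) a b c : phi NS (mul NS a (mul NS b c)) = phi NS (mul NS c (mul NS a b)).
Proof. apply phi_cyc. Qed.

Lemma Forall_splits {A} (P : A -> Prop) l a g b : Forall P l -> In (a, g, b) (splits l) ->
  Forall P a /\ P g /\ Forall P b.
Proof.
  intros H Hin. apply splits_in in Hin. subst. apply Forall_app in H as [H1 H2].
  inversion H2; subst; auto.
Qed.

Lemma core_word (NS : NCProbSpace) T X : is_centered_semicircular NS T X ->
  forall w w1 w2 h, Forall (valid_step T) w -> Forall (valid_step T) w1 -> Forall (valid_step T) w2 ->
  valid_step T h ->
  LHSv NS X w h (W NS X w1) (Lc NS X w1 h) (W NS X w2) (Rc NS X w2 h) = RHSv NS X w h (W NS X w1) (W NS X w2).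
Proof.
  intros HX w w1 w2 h Vw Vw1 Vw2 Vh.
  assert (HS : Xstep_selfadj NS T X) by (destruct HX; auto).
  assert (Mconj : forall v, Forall (valid_step T) v -> Cconj (phi NS (W NS X v)) = phi NS (W NS X (rev v))).
  { intros v Hv. rewrite <- phi_star, (star_W NS T); auto. }
  assert (ipc : forall g, valid_step T g -> Cconj (ipH NS X g h) = ipH NS X h g).
  { intros g Hg. rewrite (ipH_real NS T); auto. apply ipH_sym. }
  unfold LHSv. rewrite Asub_scal, star_add, star_scal, mul_add_r, mul_scal_r, phi_add, phi_scal.
  replace (Cconj (Copp C1)) with (Copp C1) by cext.
  assert (E1 : phi NS (mul NS (W NS X w) (star NS (mul NS (W NS X w1) (mul NS (Xh NS X h) (W NS X w2))))) =
    Csum (map (fun '(a, g, b) => Cmul (ipH NS X h g) (Cmul (Mw NS X a) (Mw NS X b))) (splits (rev w1 ++ w ++ rev w2)))).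
  { unfold Mw. rewrite <- (rec_step NS T X HX); auto.
    2:{ apply Forall_app; split; [apply Forall_rev; auto|]. apply Forall_app; split; auto. apply Forall_rev; auto. }
    rewrite !star_mul, (star_Xh NS T), !(star_W NS T) by auto. rewrite !W_app.
    rewrite <- !mul_assoc. rewrite (mul_assoc NS (W NS X w)). rewrite phi_trace.
    rewrite <- !mul_assoc. auto. }
  assert (E2 : phi NS (mul NS (W NS X w) (star NS (add NS (mul NS (Lc NS X w1 h) (W NS X w2))
                   (mul NS (W NS X w1) (Rc NS X w2 h))))) =
    Cadd (Csum (map (fun '(a, g, b) => Cmul (ipH NS X h g) (Cmul (Mw NS X (rev b)) (Mw NS X (rev a ++ w ++ rev w2)))) (splits w1)))
         (Csum (map (fun '(a, g, b) => Cmul (ipH NS X h g) (Cmul (Mw NS X (rev w1 ++ w ++ rev b)) (Mw NS X (rev a)))) (splits w2)))).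
  { unfold Mw. rewrite star_add, !star_mul, mul_add_r, phi_add, !(star_W NS T) by auto. f_equal.
    - unfold Lc. rewrite star_Asum, map_map, mul_Asum_r, mul_Asum_r, phi_Asum, !map_map.
      apply Csum_map_ext. intros [[a g] b] Hin. destruct (Forall_splits _ _ _ _ _ Vw1 Hin) as [Va [Vg Vb]].
      rewrite star_scal, mul_scal_r, mul_scal_r, phi_scal, Cconj_mul, ipc, (Mconj b), (star_W NS T) by auto.
      assert (Ep : phi NS (mul NS (W NS X w) (mul NS (W NS X (rev w2)) (W NS X (rev a)))) =
        phi NS (W NS X (rev a ++ w ++ rev w2))) by (symmetry; rewrite !W_app, phi_trace, <- mul_assoc; auto).
      rewrite Ep; ring.
    - unfold Rc. rewrite star_Asum, map_map, mul_Asum_l, mul_Asum_r, phi_Asum, !map_map.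
      apply Csum_map_ext. intros [[a g] b] Hin. destruct (Forall_splits _ _ _ _ _ Vw2 Hin) as [Va [Vg Vb]].
      rewrite star_scal, mul_scal_l, mul_scal_r, phi_scal, Cconj_mul, ipc, (Mconj a), (star_W NS T) by auto.
      assert (Ep : phi NS (mul NS (W NS X w) (mul NS (W NS X (rev b)) (W NS X (rev w1)))) =
        phi NS (W NS X (rev w1 ++ w ++ rev b))) by (symmetry; rewrite !W_app, phi_trace, <- mul_assoc; auto).
      rewrite Ep; ring. }
  rewrite E1, E2. clear E1 E2.
  rewrite splits_app, splits_app, splits_rev, !map_app, !Csum_app, !map_rev, !Csum_rev, !map_map.
  rewrite (splits_rev w2), !map_rev, !Csum_rev, !map_map.
  match goal with |- Cadd (Cadd ?S1 (Cadd ?S2 ?S3)) (Cmul _ (Cadd ?S1' ?S3')) = _ =>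
    replace S1 with S1'; [replace S3 with S3'; [transitivity S2; [ring|]|]|] end.
  - unfold RHSv. apply Csum_map_ext. intros [[a g] b] Hin. unfold Mw.
    destruct (Forall_splits _ _ _ _ _ Vw Hin) as [Va [Vg Vb]].
    rewrite ipH_sym, W_app, (star_W NS T), W_app, (star_W NS T) by auto.
    rewrite phi_trace. auto.
  - apply Csum_map_ext. intros [[a g] b] _. auto.
  - apply Csum_map_ext. intros [[a g] b] _. auto.
Qed.


Ltac norm := repeat (rewrite ?Asub_scal, ?star_add, ?star_scal, ?mul_add_l, ?mul_add_r, ?mul_scal_l,
   ?mul_scal_r, ?phi_add, ?phi_scal, ?star_zero, ?mul_zero_l, ?mul_zero_r, ?phi_zero, ?scal_zero, ?add_zero,
   ?add_zero_l).

Lemma LHSv_add1 (NS : NCProbSpace) X w h c A A' L L' P2 R2 :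
  LHSv NS X w h (add NS (scal NS c A) A') (add NS (scal NS c L) L') P2 R2 =
  Cadd (Cmul (Cconj c) (LHSv NS X w h A L P2 R2)) (LHSv NS X w h A' L' P2 R2).
Proof. unfold LHSv. norm. ring. Qed.
Lemma LHSv_zero1 (NS : NCProbSpace) X w h P2 R2 : LHSv NS X w h (zero NS) (zero NS) P2 R2 = C0.
Proof. unfold LHSv. norm. ring. Qed.
Lemma LHSv_add2 (NS : NCProbSpace) X w h c A A' L L' P1 L1 :
  LHSv NS X w h P1 L1 (add NS (scal NS c A) A') (add NS (scal NS c L) L') =
  Cadd (Cmul (Cconj c) (LHSv NS X w h P1 L1 A L)) (LHSv NS X w h P1 L1 A' L').
Proof. unfold LHSv. norm. ring. Qed.
Lemma LHSv_zero2 (NS : NCProbSpace) X w h P1 L1 : LHSv NS X w h P1 L1 (zero NS) (zero NS) = C0.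
Proof. unfold LHSv. norm. ring. Qed.
Lemma RHSv_add1 (NS : NCProbSpace) X w h c A A' P2 :
  RHSv NS X w h (add NS (scal NS c A) A') P2 =
  Cadd (Cmul (Cconj c) (RHSv NS X w h A P2)) (RHSv NS X w h A' P2).
Proof.
  unfold RHSv. rewrite <- Csum_map_mul_l, <- Csum_map_add. apply Csum_map_ext. intros [[a g] b] _.
  norm. ring.
Qed.
Lemma RHSv_add2 (NS : NCProbSpace) X w h c A A' P1 :
  RHSv NS X w h P1 (add NS (scal NS c A) A') =
  Cadd (Cmul (Cconj c) (RHSv NS X w h P1 A)) (RHSv NS X w h P1 A').
Proof.
  unfold RHSv. rewrite <- Csum_map_mul_l, <- Csum_map_add. apply Csum_map_ext. intros [[a g] b] _.
  norm. ring.
Qed.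
Lemma RHSv_zero1 (NS : NCProbSpace) X w h P2 : RHSv NS X w h (zero NS) P2 = C0.
Proof. unfold RHSv. rewrite <- (Csum_map_zero (splits w)). apply Csum_map_ext. intros [[a g] b] _. norm. ring. Qed.
Lemma RHSv_zero2 (NS : NCProbSpace) X w h P1 : RHSv NS X w h P1 (zero NS) = C0.
Proof. unfold RHSv. rewrite <- (Csum_map_zero (splits w)). apply Csum_map_ext. intros [[a g] b] _. norm. ring. Qed.

Lemma splits_idx {A} (w : list A) d :
  map (fun i => (firstn i w, nth i w d, skipn (S i) w)) (seq 0 (length w)) = splits w.
Proof.
  induction w as [|x r IH]; simpl; auto. f_equal. rewrite <- seq_shift, map_map, <- IH, map_map. auto.
Qed.

Lemma DX_word_splits (NS : NCProbSpace) X c w :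
  DX_word NS X c w = map (fun '(a, g, b) => ([(scal NS c (W NS X a), W NS X b)], g)) (splits w).
Proof.
  unfold DX_word. rewrite <- (splits_idx w []), map_map. auto.
Qed.

Definition Lp (NS : NCProbSpace) X (p : AXpoly) h : NS :=
  Asum NS (flat_map (fun '(t, g) => map (fun '(a, b) => scal NS (Cmul (ipH NS X g h) (phi NS b)) a) t) (DX NS X p)).
Definition Rp (NS : NCProbSpace) X (p : AXpoly) h : NS :=
  Asum NS (flat_map (fun '(t, g) => map (fun '(a, b) => scal NS (Cmul (ipH NS X g h) (phi NS a)) b) t) (DX NS X p)).

Lemma Asum_flat_map (NS : NCProbSpace) {A} (f : A -> list NS) l :
  Asum NS (flat_map f l) = Asum NS (map (fun x => Asum NS (f x)) l).
Proof. induction l; simpl; auto. rewrite Asum_app, IHl; auto. Qed.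

Lemma Lp_cons (NS : NCProbSpace) X c w p h :
  Lp NS X ((c, w) :: p) h = add NS (scal NS c (Lc NS X w h)) (Lp NS X p h).
Proof.
  unfold Lp. simpl DX. rewrite flat_map_app, Asum_app. f_equal.
  rewrite DX_word_splits, Asum_flat_map, map_map. unfold Lc. rewrite <- Asum_map_scal.
  f_equal. apply map_ext. intros [[a g] b]. simpl. rewrite add_zero, !scal_assoc. f_equal. ring.
Qed.
Lemma Rp_cons (NS : NCProbSpace) X c w p h :
  Rp NS X ((c, w) :: p) h = add NS (scal NS c (Rc NS X w h)) (Rp NS X p h).
Proof.
  unfold Rp. simpl DX. rewrite flat_map_app, Asum_app. f_equal.
  rewrite DX_word_splits, Asum_flat_map, map_map. unfold Rc. rewrite <- Asum_map_scal.
  f_equal. apply map_ext. intros [[a g] b]. simpl. rewrite add_zero, !scal_assoc, phi_scal. f_equal. ring.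
Qed.
Lemma evalP_cons (NS : NCProbSpace) X c w p :
  evalP NS X ((c, w) :: p) = add NS (scal NS c (W NS X w)) (evalP NS X p).
Proof. reflexivity. Qed.

Lemma core_p1 (NS : NCProbSpace) X w h P2 R2 (p1 : AXpoly) :
  (forall c w1, In (c, w1) p1 -> LHSv NS X w h (W NS X w1) (Lc NS X w1 h) P2 R2 = RHSv NS X w h (W NS X w1) P2) ->
  LHSv NS X w h (evalP NS X p1) (Lp NS X p1 h) P2 R2 = RHSv NS X w h (evalP NS X p1) P2.
Proof.
  induction p1 as [|[c w1] p1 IH]; intros H.
  - unfold Lp; simpl. rewrite LHSv_zero1, RHSv_zero1; auto.
  - rewrite evalP_cons, Lp_cons, LHSv_add1, RHSv_add1, (H c w1 (or_introl eq_refl)), IH; auto. intros; eapply H; right; eauto.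
Qed.
Lemma core_p2 (NS : NCProbSpace) X w h P1 L1 (p2 : AXpoly) :
  (forall c w2, In (c, w2) p2 -> LHSv NS X w h P1 L1 (W NS X w2) (Rc NS X w2 h) = RHSv NS X w h P1 (W NS X w2)) ->
  LHSv NS X w h P1 L1 (evalP NS X p2) (Rp NS X p2 h) = RHSv NS X w h P1 (evalP NS X p2).
Proof.
  induction p2 as [|[c w2] p2 IH]; intros H.
  - unfold Rp; simpl. rewrite LHSv_zero2, RHSv_zero2; auto.
  - rewrite evalP_cons, Rp_cons, LHSv_add2, RHSv_add2, (H c w2 (or_introl eq_refl)), IH; auto. intros; eapply H; right; eauto.
Qed.

Lemma core_general (NS : NCProbSpace) T X : is_centered_semicircular NS T X ->
  forall w h p1 p2, Forall (valid_step T) w -> valid_step T h -> valid_poly T p1 -> valid_poly T p2 ->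
  LHSv NS X w h (evalP NS X p1) (Lp NS X p1 h) (evalP NS X p2) (Rp NS X p2 h) =
  RHSv NS X w h (evalP NS X p1) (evalP NS X p2).
Proof.
  intros HX w h p1 p2 Vw Vh V1 V2. apply core_p1. intros c w1 Hin1.
  apply core_p2. intros c2 w2 Hin2.
  unfold valid_poly in V1, V2. rewrite Forall_forall in V1, V2.
  apply (core_word NS T X HX); auto.
  apply (V1 _ Hin1). apply (V2 _ Hin2).
Qed.


Lemma Csum_swap {A B} (f : A -> B -> C) l1 l2 :
  Csum (map (fun x => Csum (map (fun y => f x y) l2)) l1) =
  Csum (map (fun y => Csum (map (fun x => f x y) l1)) l2).
Proof.
  induction l1 as [|x l1 IH]; simpl.
  - rewrite Csum_map_zero; auto.
  - rewrite IH, <- Csum_map_add. auto.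
Qed.

Lemma phiphi_app (NS : NCProbSpace) l1 l2 : phiphi NS (l1 ++ l2) = Cadd (phiphi NS l1) (phiphi NS l2).
Proof. unfold phiphi. rewrite map_app, Csum_app; auto. Qed.
Lemma phiphi_scal (NS : NCProbSpace) c t : phiphi NS (T2scal NS c t) = Cmul c (phiphi NS t).
Proof.
  unfold phiphi, T2scal. rewrite map_map, <- Csum_map_mul_l. f_equal. apply map_ext.
  intros [a b]. rewrite phi_scal. ring.
Qed.
Lemma phiphi_flat (NS : NCProbSpace) {A} (f : A -> T2 NS) l :
  phiphi NS (flat_map f l) = Csum (map (fun x => phiphi NS (f x)) l).
Proof. induction l; simpl; auto. rewrite phiphi_app, IHl; auto. Qed.

Lemma R1 (NS : NCProbSpace) X E F : phiphi NS (pairSemi NS X E F) =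
  Csum (map (fun '(x, h) => Csum (map (fun '(y, k) => Cmul (ipH NS X h k) (phiphi NS (T2mul NS x y))) F)) E).
Proof.
  unfold pairSemi. rewrite phiphi_flat. f_equal. apply map_ext. intros [x h].
  rewrite phiphi_flat. f_equal. apply map_ext. intros [y k]. apply phiphi_scal.
Qed.
Lemma R2 (NS : NCProbSpace) x y : phiphi NS (T2mul NS x y) =
  Csum (map (fun '(a, b) => Csum (map (fun '(c, d) => Cmul (phi NS (mul NS a c)) (phi NS (mul NS b d))) y)) x).
Proof.
  unfold T2mul. rewrite phiphi_flat. f_equal. apply map_ext. intros [a b].
  unfold phiphi. rewrite map_map. f_equal. apply map_ext. intros [c d]. auto.
Qed.

Lemma LHS_expand (NS : NCProbSpace) {A B} (f : A -> NS) (g : B -> NS) l1 l2 :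
  phi NS (mul NS (Asum NS (map f l1)) (star NS (Asum NS (map g l2)))) =
  Csum (map (fun x => Csum (map (fun y => phi NS (mul NS (f x) (star NS (g y)))) l2)) l1).
Proof.
  rewrite star_Asum, mul_Asum_l, phi_Asum, !map_map. f_equal. apply map_ext. intros x.
  rewrite mul_Asum_r, phi_Asum, !map_map. auto.
Qed.

Lemma Asub_add (NS : NCProbSpace) a b c d :
  Asub NS (add NS a b) (add NS c d) = add NS (Asub NS a c) (Asub NS b d).
Proof.
  rewrite !Asub_scal, scal_add_r. rewrite <- !add_assoc. f_equal.
  rewrite !add_assoc. f_equal. apply add_comm.
Qed.
Lemma Asub_Asum (NS : NCProbSpace) {A} (f g : A -> NS) l :
  Asub NS (Asum NS (map f l)) (Asum NS (map g l)) = Asum NS (map (fun x => Asub NS (f x) (g x)) l).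
Proof.
  induction l as [|x l IH]; simpl.
  - rewrite Asub_scal, scal_zero, add_zero; auto.
  - rewrite Asub_add, IH; auto.
Qed.

Lemma IdphiId_app (NS : NCProbSpace) l1 l2 : IdphiId NS (l1 ++ l2) = add NS (IdphiId NS l1) (IdphiId NS l2).
Proof. unfold IdphiId. rewrite map_app, Asum_app; auto. Qed.
Lemma pairE3_app (NS : NCProbSpace) X l1 l2 h : pairE3 NS X (l1 ++ l2) h = pairE3 NS X l1 h ++ pairE3 NS X l2 h.
Proof. unfold pairE3. apply flat_map_app. Qed.
Lemma Id_pair_flat (NS : NCProbSpace) X {A} (f : A -> list (T3 NS * step)) l h :
  IdphiId NS (pairE3 NS X (flat_map f l) h) = Asum NS (map (fun y => IdphiId NS (pairE3 NS X (f y) h)) l).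
Proof.
  induction l as [|y l IH]; simpl. unfold IdphiId; auto.
  rewrite pairE3_app, IdphiId_app, IH; auto.
Qed.

Lemma IdA (NS : NCProbSpace) X (E : list (T2 NS * step)) P2 h :
  IdphiId NS (pairE3 NS X (map (fun z => let '(t, k) := z in
      (map (fun ab => let '(a, b) := ab in (a, b, P2)) t, k)) E) h) =
  mul NS (Asum NS (flat_map (fun '(t, g) => map (fun '(a, b) => scal NS (Cmul (ipH NS X g h) (phi NS b)) a) t) E)) P2.
Proof.
  induction E as [|[t k] E IH]; simpl. rewrite mul_zero_l; unfold IdphiId; auto.
  unfold pairE3 in *. simpl. rewrite IdphiId_app, IH, Asum_app, mul_add_l. f_equal.
  unfold IdphiId, T3scal. rewrite mul_Asum_l, !map_map. f_equal. apply map_ext. intros [a b].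
  rewrite mul_scal_l, !mul_scal_l, scal_assoc. f_equal. ring.
Qed.

Lemma IdB (NS : NCProbSpace) X (E : list (T2 NS * step)) P1 h :
  IdphiId NS (pairE3 NS X (map (fun z => let '(t, k) := z in
      (map (fun ab => let '(a, b) := ab in (P1, a, b)) t, k)) E) h) =
  mul NS P1 (Asum NS (flat_map (fun '(t, g) => map (fun '(a, b) => scal NS (Cmul (ipH NS X g h) (phi NS a)) b) t) E)).
Proof.
  induction E as [|[t k] E IH]; simpl. rewrite mul_zero_r; unfold IdphiId; auto.
  unfold pairE3 in *. simpl. rewrite IdphiId_app, IH, Asum_app, mul_add_r. f_equal.
  unfold IdphiId, T3scal. rewrite mul_Asum_r, !map_map. f_equal. apply map_ext. intros [a b].
  rewrite mul_scal_l, mul_scal_r, scal_assoc. f_equal. ring.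
Qed.

Definition delta1 (NS : NCProbSpace) X p1 p2 h : NS :=
  Asub NS (mul NS (evalP NS X p1) (mul NS (Xh NS X h) (evalP NS X p2)))
    (add NS (mul NS (Lp NS X p1 h) (evalP NS X p2)) (mul NS (evalP NS X p1) (Rp NS X p2 h))).

Lemma Dsum (NS : NCProbSpace) X (xx : PT2) h :
  Asub NS (sharp NS (evalPT2 NS X xx) (Xh NS X h)) (IdphiId NS (pairE3 NS X (DX2 NS X xx) h)) =
  Asum NS (map (fun '(p1, p2) => delta1 NS X p1 p2 h) xx).
Proof.
  unfold delta1.
  replace (sharp NS (evalPT2 NS X xx) (Xh NS X h)) with
    (Asum NS (map (fun y => let '(p1, p2) := y in mul NS (evalP NS X p1) (mul NS (Xh NS X h) (evalP NS X p2))) xx)).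
  2:{ unfold sharp, evalPT2. rewrite map_map. f_equal. apply map_ext. intros [p1 p2]; auto. }
  replace (IdphiId NS (pairE3 NS X (DX2 NS X xx) h)) with
    (Asum NS (map (fun y => let '(p1, p2) := y in
       add NS (mul NS (Lp NS X p1 h) (evalP NS X p2)) (mul NS (evalP NS X p1) (Rp NS X p2 h))) xx)).
  2:{ unfold DX2. rewrite Id_pair_flat. f_equal. apply map_ext. intros [p1 p2].
      rewrite pairE3_app, IdphiId_app, IdA, IdB. auto. }
  rewrite Asub_Asum. f_equal. apply map_ext. intros [p1 p2]; auto.
Qed.


Theorem mainTheorem2 (NS : NCProbSpace) (T : R) (X : R -> NS)
  (HT : 0 < T) (HX : is_centered_semicircular NS T X)
  (Y : AXpoly) (HY : valid_poly T Y) (U : EU) (HU : valid_EU T U) :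
  phi NS (mul NS (evalP NS X Y) (star NS (deltaX NS X U))) =
  phiphi NS (pairSemi NS X (DX NS X Y) (EUstar NS X U)).
Proof.
  change (evalP NS X Y) with (Asum NS (map (fun x => let '(c, w) := x in scal NS c (W NS X w)) Y)).
  unfold deltaX. rewrite LHS_expand, R1. unfold DX at 1. rewrite Csum_flat_map.
  apply Csum_map_ext. intros [c w] HinY.
  assert (Vw : Forall (valid_step T) w).
  { unfold valid_poly in HY; rewrite Forall_forall in HY; apply (HY _ HinY). }
  rewrite DX_word_splits, map_map. unfold EUstar.
  rewrite (Csum_map_ext _ (fun x => Csum (map (fun y => (fun x y => let '(a, g, b) := x in let '(xx, h) := y in
      Cmul (ipH NS X g h) (phiphi NS (T2mul NS [(scal NS c (W NS X a), W NS X b)] (T2star NS (evalPT2 NS X xx))))) x y) U)) (splits w)).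
  2:{ intros [[a g] b] _. rewrite map_map. apply Csum_map_ext. intros [xx h] _. auto. }
  rewrite <- Csum_swap. apply Csum_map_ext. intros [xx h] HinU.
  unfold valid_EU in HU. rewrite Forall_forall in HU. destruct (HU _ HinU) as [Vh Vxx]. simpl in Vh, Vxx.
  rewrite Dsum, star_Asum, mul_Asum_r, phi_Asum, !map_map.
  rewrite (Csum_map_ext _ (fun x => Csum (map (fun y => (fun x y => let '(a, g, b) := x in let '(p1, p2) := y in
      Cmul (ipH NS X g h) (Cmul (phi NS (mul NS (scal NS c (W NS X a)) (star NS (evalP NS X p1))))
         (phi NS (mul NS (W NS X b) (star NS (evalP NS X p2)))))) x y) xx)) (splits w)).
  2:{ intros [[a g] b] _. rewrite R2. simpl. rewrite Cadd_C0_r, <- Csum_map_mul_l.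
      unfold T2star, evalPT2. rewrite !map_map. apply Csum_map_ext. intros [p1 p2] _. auto. }
  rewrite <- Csum_swap. apply Csum_map_ext. intros [p1 p2] Hinxx.
  rewrite Forall_forall in Vxx. destruct (Vxx _ Hinxx) as [V1 V2]. simpl in V1, V2.
  rewrite mul_scal_l, phi_scal.
  change (phi NS (mul NS (W NS X w) (star NS (delta1 NS X p1 p2 h))))
    with (LHSv NS X w h (evalP NS X p1) (Lp NS X p1 h) (evalP NS X p2) (Rp NS X p2 h)).
  rewrite (core_general NS T X HX); auto. unfold RHSv. rewrite <- Csum_map_mul_l.
  apply Csum_map_ext. intros [[a g] b] _. rewrite mul_scal_l, phi_scal. ring.
Qed.
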